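(* Let $G=G_{A,B}$ be a DSR graph (for some $A\in\mathbb{R}^{n\times m}$, $B\in\mathbb{R}^{m\times n}$) which is steady. Then every (nonempty) closed walk in $G$ is an s-walk.
   Context: DSR graphs: for $A\in\mathbb{R}^{n\times m}$, $B\in\mathbb{R}^{m\times n}$, $G_{A,B}$ is the signed, labelled bipartite digraph with S-vertices $S_1,\dots,S_n$ and R-vertices $R_1,\dots,R_m$, with an arc $R_j\to S_i$ of sign $\mathrm{sign}(A_{ij})$ iff $A_{ij}\ne0$ and an arc $S_i\to R_j$ of sign $\mathrm{sign}(B_{ji})$ iff $B_{ji}\ne0$; a pair of antiparallel arcs of the same sign is regarded as a single undirected edge, traversable in both directions. An edge arising from $A_{ij}\ne0$ (R-to-S or undirected) has label $|A_{ij}|$; an edge with only S-to-R orientation has label $\infty$. A walk is an alternating sequence of vertices and edges traversing each edge consistently with its orientation, with repetitions of vertices and edges allowed; it is closed if its first and last vertices coincide. A cycle is a nonempty closed walk that repeats no vertex except first$=$last (a 2-cycle requires two distinct edges between the same vertices). A closed walk $(e_1,\dots,e_{2r})$ is an s-walk if all its labels are finite and $\prod_{i=1}^r l(e_{2i-1})=\prod_{i=1}^r l(e_{2i})$; an s-cycle is a cycle that is an s-walk. $G$ is steady if all its cycles are s-cycles. *)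

(* Defs.v *)
From HB Require Import structures.
From mathcomp Require Import all_boot all_order all_algebra.
From mathcomp Require Import reals.
Set Implicit Arguments. Unset Strict Implicit. Unset Printing Implicit Defensive.
Import Order.TTheory GRing.Theory Num.Theory.
Local Open Scope ring_scope.

Section DSR.
Variables (R : realType) (n m : nat) (A : 'M[R]_(n, m)) (B : 'M[R]_(m, n)).

(* Vertices: inl i = S_i, inr j = R_j. *)
Definition dsr_vertex := ('I_n + 'I_m)%type.

(* Edges between S_i and R_j: (i, j, true) is the edge arising from
   A_ij <> 0 (an arc R_j -> S_i, or an undirected edge when merged with the
   S_i -> R_j arc of the same sign); (i, j, false) is the S_i -> R_j arc
   arising from B_ji <> 0 when it is NOT merged. *)
Definition dsr_edge := ('I_n * 'I_m * bool)%type.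

Definition dsr_merged (i : 'I_n) (j : 'I_m) : bool :=
  [&& A i j != 0, B j i != 0 & Num.sg (A i j) == Num.sg (B j i)].

Definition dsr_edge_exists (e : dsr_edge) : bool :=
  let: (i, j, k) := e in
  if k then A i j != 0 else (B j i != 0) && ~~ dsr_merged i j.

Definition dsr_traverses (e : dsr_edge) (u v : dsr_vertex) : bool :=
  let: (i, j, k) := e in
  dsr_edge_exists e &&
  (if k then ((u == inr j) && (v == inl i)) ||
             [&& dsr_merged i j, u == inl i & v == inr j]
   else (u == inl i) && (v == inr j)).

(* label: Some x for finite label x, None for infinity *)
Definition dsr_label (e : dsr_edge) : option R :=
  let: (i, j, k) := e in if k then Some `|A i j| else None.

Fixpoint dsr_is_walk (v0 : dsr_vertex) (s : seq (dsr_edge * dsr_vertex)) : bool :=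
  match s with
  | [::] => true
  | (e, v) :: s' => dsr_traverses e v0 v && dsr_is_walk v s'
  end.

Definition dsr_closed_walk (v0 : dsr_vertex) (s : seq (dsr_edge * dsr_vertex)) :=
  [&& dsr_is_walk v0 s, (0 < size s)%N & last v0 (map snd s) == v0].

(* cycle: nonempty closed walk, no repeated vertex except first = last,
   and no repeated edge (so a 2-cycle uses two distinct edges). *)
Definition dsr_cycle (v0 : dsr_vertex) (s : seq (dsr_edge * dsr_vertex)) :=
  [&& dsr_closed_walk v0 s, uniq (map snd s) & uniq (map fst s)].

(* s-walk: closed walk (e_1,...,e_2r) with all labels finite and the
   product of odd-indexed labels equal to the product of even-indexed ones
   (1-based indexing; 0-based position k is e_{k+1}). *)
Definition dsr_s_walk (v0 : dsr_vertex) (s : seq (dsr_edge * dsr_vertex)) :=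
  let ls := [seq odflt 0 (dsr_label p.1) | p <- s] in
  [&& dsr_closed_walk v0 s,
      all (fun p => dsr_label p.1 != None) s &
      \prod_(k < size s | ~~ odd k) ls`_k == \prod_(k < size s | odd k) ls`_k].

Definition dsr_steady : Prop :=
  forall v0 s, dsr_cycle v0 s -> dsr_s_walk v0 s.

End DSR.

(* Main.v *)
Require Import Defs.
From HB Require Import structures.
From mathcomp Require Import all_boot all_order all_algebra.
From mathcomp Require Import reals.
From mathcomp Require Import zify.
Set Implicit Arguments. Unset Strict Implicit. Unset Printing Implicit Defensive.
Import Order.TTheory GRing.Theory Num.Theory.
Local Open Scope ring_scope.

Lemma not_uniq_split (T U : eqType) (f : T -> U) (s : seq T) :
  ~~ uniq (map f s) ->
  exists s1 x s2 y s3, s = s1 ++ x :: s2 ++ y :: s3 /\ f x = f y.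
Proof.
elim: s => [|a t IH] //=; rewrite negb_and negbK => /orP[H|H].
  case/mapP: H => y yt fay; case/splitPr: yt => p1 p2.
  by exists [::], a, p1, y, p2.
have [s1 [x [s2 [y [s3 [-> fxy]]]]]] := IH H.
by exists (a :: s1), x, s2, y, s3.
Qed.

Lemma uniq_mid (T : eqType) (p1 : seq T) x p2 :
  uniq (p1 ++ x :: p2) -> (x \notin p1) && (x \notin p2).
Proof.
rewrite uniq_catC /= mem_cat negb_or => /andP[/andP[h1 h2] _].
by rewrite h1 h2.
Qed.

Section S.
Variables (R : realType) (n m : nat) (A : 'M[R]_(n, m)) (B : 'M[R]_(m, n)).
Notation V := (dsr_vertex n m).
Notation E := (dsr_edge n m).
Notation walk := (dsr_is_walk A B).

Lemma walk_cat v0 s1 s2 :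
  walk v0 (s1 ++ s2) = walk v0 s1 && walk (last v0 (map snd s1)) s2.
Proof. by elim: s1 v0 => [|[e v] s1 IH] v0 //=; rewrite IH andbA. Qed.

Definition side (v : V) : bool := if v is inl _ then true else false.

Lemma trav_ends (i : 'I_n) (j : 'I_m) k u v :
  dsr_traverses A B (i, j, k) u v ->
  (u = inr j /\ v = inl i) \/ (u = inl i /\ v = inr j).
Proof.
rewrite /dsr_traverses; case: k => /andP[_ H].
  case/orP: H => [/andP[/eqP-> /eqP->]|/and3P[_ /eqP-> /eqP->]]; by [left|right].
by case/andP: H => /eqP-> /eqP->; right.
Qed.

Lemma trav_side e u v : dsr_traverses A B e u v -> side v = ~~ side u.
Proof. by case: e => [[i j] k] /trav_ends [[->->]|[->->]]. Qed.

Lemma walk_side v0 s : walk v0 s ->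
  side (last v0 (map snd s)) = side v0 (+) odd (size s).
Proof.
elim: s v0 => [|[e v] s IH] v0 /=; first by rewrite addbF.
case/andP=> /trav_side sv /IH ->; rewrite sv.
by case: (side v0); case: (odd _).
Qed.

Lemma closed_even v0 s : dsr_closed_walk A B v0 s -> ~~ odd (size s).
Proof.
case/and3P=> w _ /eqP l; have := walk_side w; rewrite l.
by case: (side v0); case: (odd _).
Qed.

Fixpoint pe (l : seq R) : R := match l with [::] => 1 | x :: l' => x * po l' end
with po (l : seq R) : R := match l with [::] => 1 | _ :: l' => pe l' end.

Lemma pe_big l : \prod_(k < size l | ~~ odd k) l`_k = pe l /\
                 \prod_(k < size l | odd k) l`_k = po l.
Proof.
elim: l => [|x l [IH1 IH2]]; first by rewrite !big_ord0.
change (size (x :: l)) with (size l).+1.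
split.
  rewrite big_mkcond big_ord_recl /= -IH2 [X in _ = _ * X]big_mkcond /=.
  by congr (_ * _); apply: eq_bigr => k _; rewrite /= ?add0n ?negbK.
rewrite big_mkcond big_ord_recl /= -IH1 [RHS]big_mkcond /= mul1r.
by apply: eq_bigr => k _; rewrite /= ?add0n.
Qed.

Lemma pe_cat l1 l2 :
  pe (l1 ++ l2) = pe l1 * (if odd (size l1) then po l2 else pe l2) /\
  po (l1 ++ l2) = po l1 * (if odd (size l1) then pe l2 else po l2).
Proof.
elim: l1 => [|x l [IH1 IH2]] /=; first by rewrite !mul1r.
rewrite IH1 IH2; case: (odd _) => /=; by rewrite ?mulrA.
Qed.

Definition L (s : seq (E * V)) := [seq odflt 0 (dsr_label A p.1) | p <- s].

Lemma swalkE v0 s : dsr_s_walk A B v0 s =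
  [&& dsr_closed_walk A B v0 s, all (fun p => dsr_label A p.1 != None) s &
      pe (L s) == po (L s)].
Proof.
rewrite /dsr_s_walk -(size_map (fun p => odflt 0 (dsr_label A p.1)) s).
by have [-> ->] := pe_big (L s).
Qed.

Lemma swalk_split v0 s1 s2 s3 :
  dsr_closed_walk A B v0 (s1 ++ s2 ++ s3) ->
  last (last v0 (map snd s1)) (map snd s2) = last v0 (map snd s1) ->
  dsr_s_walk A B (last v0 (map snd s1)) s2 ->
  dsr_s_walk A B v0 (s1 ++ s3) ->
  dsr_s_walk A B v0 (s1 ++ s2 ++ s3).
Proof.
move=> cw lw sw2 sw13; have ev2 : ~~ odd (size s2) by case/and3P: sw2 => + _ _; apply: closed_even.
rewrite swalkE cw /=; move: sw2 sw13; rewrite !swalkE.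
case/and3P=> _ a2 /eqP p2; case/and3P=> _ a13 /eqP p13.
move: a13; rewrite !all_cat a2 => /andP[-> ->] /=.
move: p13; rewrite /L !map_cat.
set l1 := map _ s1; set l2 := map _ s2; set l3 := map _ s3.
have [e1 o1] := pe_cat l1 (l2 ++ l3); have [e2 o2] := pe_cat l2 l3.
have [e3 o3] := pe_cat l1 l3.
have ev2' : odd (size l2) = false by rewrite size_map; apply/negbTE.
rewrite e1 o1 e2 o2 e3 o3 ev2' p2 => p13.
by case: (odd (size l1)) p13 => /= p13; apply/eqP; rewrite -/l2 mulrCA p13 [RHS]mulrCA.
Qed.

Lemma trav_swap e u v u' v' :
  dsr_traverses A B e u v -> dsr_traverses A B e u' v' -> v != v' ->
  u = v' /\ u' = v.
Proof.
case: e => [[i j] k] /trav_ends [[->->]|[->->]] /trav_ends [[->->]|[->->]];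
  rewrite ?eqxx // => _; by split.
Qed.

Lemma last_in (x0 : V) (t : seq (E * V)) :
  t != [::] -> last x0 (map snd t) \in map snd t.
Proof. by case: t => [|z t] //= _; apply: mem_last. Qed.

End S.

Theorem lemma2p7 (R : realType) (n m : nat) (A : 'M[R]_(n, m)) (B : 'M[R]_(m, n)) :
  dsr_steady A B ->
  forall (v0 : dsr_vertex n m) (s : seq (dsr_edge n m * dsr_vertex n m)),
    dsr_closed_walk A B v0 s -> dsr_s_walk A B v0 s.
Proof.
move=> st v0 s.
have [N] := ubnP (size s); elim: N v0 s => [|N IH] v0 s; first by rewrite ltn0.
move=> /ltnSE leN cw.
case: (boolP (uniq (map snd s))) => Uv.
  case: (boolP (uniq (map fst s))) => Ue.
    by apply: st; rewrite /dsr_cycle cw Uv Ue.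
  have [s1 [[e vx] [s2 [[e' vy] [s3 [Es /= fxy]]]]]] := not_uniq_split Ue.
  subst e' s.
  move: Uv; rewrite map_cat /= map_cat /= => Uv.
  have /andP[nx1 nx23] := uniq_mid Uv.
  have /andP[ny12 ny3] : (vy \notin map snd s1 ++ vx :: map snd s2) &&
                         (vy \notin map snd s3) by apply: uniq_mid; rewrite -catA.
  move: nx23; rewrite mem_cat in_cons !negb_or => /and3P[nx2 nxy nx3].
  move: ny12; rewrite mem_cat in_cons !negb_or => /and3P[ny1 nyx ny2].
  move: (cw) => /and3P[w _ l].
  move: w; rewrite walk_cat /= walk_cat /=.
  case/andP=> w1 /andP[t1 /andP[w2 /andP[t2 w3]]].
  have [ea eb] := trav_swap t1 t2 nxy.
  have s2E : s2 = [::].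
    case: s2 eb nx2 {w2 t2 ny2 l cw Ue Uv leN} => // z t eb nx2.
    by move: (last_in vx (t := z :: t) isT); rewrite eb (negbTE nx2).
  subst s2.
  have s1E : s1 = [::].
    case: s1 ea ny1 {w1 t1 nx1 l cw Ue Uv leN} => // z t ea ny1.
    by move: (last_in v0 (t := z :: t) isT); rewrite ea (negbTE ny1).
  subst s1; move: ea => /= ea; subst vy.
  have s3E : s3 = [::].
    case: s3 l ny3 {w3 cw Ue Uv leN nx3} => // z t /= /eqP l ny3.
    by move: (last_in v0 (t := z :: t) isT); rewrite /= l (negbTE ny3).
  subst s3.
  clear Ue Uv leN l; move: e t1 t2 cw {eb} => [[i j] [|]] t1 t2 cw.
    by rewrite swalkE cw /= eqxx.
  move: t1 t2; rewrite /dsr_traverses /= => /andP[_ /andP[/eqP-> /eqP->]].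
  by move=> /andP[_ /andP[]].
have [s1 [x [s2 [y [s3 [Es fxy]]]]]] := not_uniq_split Uv.
have Es' : s = rcons s1 x ++ rcons s2 y ++ s3 by rewrite Es !cat_rcons.
rewrite Es' in cw leN *.
have lx : last v0 (map snd (rcons s1 x)) = x.2 by rewrite map_rcons last_rcons.
have ly : last x.2 (map snd (rcons s2 y)) = x.2 by rewrite map_rcons last_rcons.
move: (cw) => /and3P[w _ l].
move: w; rewrite !walk_cat lx ly => /and3P[w1 w2 w3].
move: leN; rewrite !size_cat !size_rcons => leN.
apply: swalk_split => //; rewrite ?lx ?ly //.
  apply: IH; first by rewrite size_rcons; lia.
  by apply/and3P; split => //; rewrite ?size_rcons //; apply/eqP; exact: ly.
apply: IH; first by rewrite size_cat size_rcons; lia.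
apply/and3P; split.
- by rewrite walk_cat w1 lx.
- by rewrite size_cat size_rcons.
move: l; rewrite !map_cat !last_cat lx ly.
by [].
Qed.
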